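(* Let $\delta,\alpha\geq0$, $\theta\in[0,\alpha]$, $\sigma\in\mathbb{R}$, $\varepsilon\in(0,1)$, and let $E_1(t,\xi)=\frac12|\xi|^{2\delta+\sigma}|\widehat{v}_t(t,\xi)|^2+\frac12|\xi|^{2\alpha+\sigma}|\widehat{v}(t,\xi)|^2$. (i) If $(v_0,v_1)\in H^{\alpha+\frac\sigma2}(\mathbb{R}^n)\times H^{\delta+\frac\sigma2}(\mathbb{R}^n)$ and $\delta\leq\theta\leq\alpha$, then there is a constant $c>0$ such that $$\int_{|\xi|\geq\varepsilon}E_1(t,\xi)\,d\xi\lesssim\left\{\|v_1\|^2_{H^{\delta+\frac\sigma2}}+\|v_0\|^2_{H^{\alpha+\frac\sigma2}}\right\}e^{-ct},\quad\forall t\geq0.$$ (ii) If $(v_0,v_1)\in H^s(\mathbb{R}^n)\times H^r(\mathbb{R}^n)$, $\beta>0$ and $\theta<\delta$, with $s=\alpha+\frac{\delta-\theta}{\beta}+\frac\sigma2$ and $r=\delta+\frac{\delta-\theta}{\beta}+\frac\sigma2$, then there is $C=C(\beta)>0$ such that $$\int_{|\xi|\geq\varepsilon}E_1(t,\xi)\,d\xi\leq C\left\{\|v_1\|^2_{H^r}+\|v_0\|^2_{H^s}\right\}(1+t)^{-\frac1\beta},\quad\forall t\geq0.$$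
   Context: $\widehat{v}(t,\xi)$ is the solution of $(1+|\xi|^{2\delta})\widehat{v}_{tt}+|\xi|^{2\theta}\widehat{v}_t+|\xi|^{2\alpha}\widehat{v}=0$, $\widehat{v}(0)=\widehat{v}_0$, $\widehat{v}_t(0)=\widehat{v}_1$, the Fourier transform in $x$ of the solution of $v_{tt}+(-\Delta)^\delta v_{tt}+(-\Delta)^\alpha v+(-\Delta)^\theta v_t=0$, $v(0)=v_0$, $v_t(0)=v_1$. $\lesssim$ means $\leq C\cdot$ with $C$ independent of $t$ and data. *)

(* Defs.v *)
From HB Require Import structures.
From mathcomp Require Import all_boot all_order all_algebra.
From mathcomp Require Import all_classical all_reals all_analysis.
Set Implicit Arguments. Unset Strict Implicit. Unset Printing Implicit Defensive.
Import Order.TTheory GRing.Theory Num.Theory.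
Import numFieldNormedType.Exports.
Local Open Scope ring_scope.

(* Points of R^n are n-tuples of reals (n.-tuple R carries the product
   sigma-algebra from MathComp-Analysis, so measurability is expressible). *)

Definition enorm2 (R : realType) (n : nat) (xi : n.-tuple R) : R :=
  \sum_(i < n) (tnth xi i) ^+ 2.
Definition enorm (R : realType) (n : nat) (xi : n.-tuple R) : R :=
  Num.sqrt (enorm2 xi).

(* Lebesgue integral over R^n of a nonnegative function, realised as the
   iterated one-dimensional Lebesgue integral (equal to the Lebesgue
   integral w.r.t. the n-dimensional Lebesgue measure by Tonelli for
   nonnegative measurable integrands). *)
Fixpoint intRn (R : realType) (n : nat) : (n.-tuple R -> \bar R) -> \bar R :=
  match n with
  | 0 => fun f => f [tuple]
  | k.+1 => fun f =>
      (\int[@lebesgue_measure R]_x intRn (fun y : k.-tuple R => f (cons_tuple x y)))%E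
  end.

(* Squared H^s norm of a tempered distribution given through its Fourier
   transform, the complex-valued function xi |-> fre xi + i fim xi:
   ||f||_{H^s}^2 = \int_{R^n} (1+|xi|^2)^s |\hat f(xi)|^2 dxi. *)
Definition Hs_norm2 (R : realType) (n : nat) (s : R)
    (fre fim : n.-tuple R -> R) : \bar R :=
  intRn (fun xi => ((1 + enorm2 xi) `^ s * (fre xi ^+ 2 + fim xi ^+ 2))%:E).

Definition in_Hs (R : realType) (n : nat) (s : R)
    (fre fim : n.-tuple R -> R) : Prop :=
  measurable_fun setT fre /\ measurable_fun setT fim /\
  (Hs_norm2 s fre fim < +oo)%E.

Definition solves_ode (R : realType) (n : nat) (delta alpha theta : R)
    (xi : n.-tuple R) (f : R -> R) (a b : R) : Prop :=
  (forall t, derivable f t 1) /\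
  (forall t, derivable (derive1 f) t 1) /\
  f 0 = a /\ derive1 f 0 = b /\
  forall t, (1 + enorm xi `^ (2 * delta)) * derive1 (derive1 f) t
            + enorm xi `^ (2 * theta) * derive1 f t
            + enorm xi `^ (2 * alpha) * f t = 0.

(* E_1(t,xi) for vhat = ure + i uim *)
Definition E1 (R : realType) (n : nat) (delta alpha sigma : R)
    (ure uim : R -> n.-tuple R -> R) (t : R) (xi : n.-tuple R) : R :=
  2^-1 * enorm xi `^ (2 * delta + sigma) *
    (derive1 (fun s => ure s xi) t ^+ 2 + derive1 (fun s => uim s xi) t ^+ 2)
  + 2^-1 * enorm xi `^ (2 * alpha + sigma) * (ure t xi ^+ 2 + uim t xi ^+ 2).

Definition E1_high (R : realType) (n : nat) (delta alpha sigma eps : R)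
    (ure uim : R -> n.-tuple R -> R) (t : R) : \bar R :=
  intRn (fun xi => if eps <= enorm xi then (E1 delta alpha sigma ure uim t xi)%:E
                   else 0%E).

(* Main.v *)
Require Import Defs.
From HB Require Import structures.
From mathcomp Require Import all_boot all_order all_algebra.
From mathcomp Require Import all_classical all_reals all_analysis.
From mathcomp Require Import measurable_realfun lebesgue_measure lebesgue_integral.
From mathcomp Require Import lra ring.
Import Order.TTheory GRing.Theory Num.Theory.
Import numFieldNormedType.Exports.
Local Open Scope ring_scope.


Module MA.
Local Open Scope ring_scope.
Local Open Scope ereal_scope.

Section intRn.
Variable R : realType.

Lemma intRn_ge0 (k : nat) (f : k.-tuple R -> \bar R) :
  (forall y, 0 <= f y) -> 0 <= intRn f.
Proof.
elim: k f => [|k IH] f f0 /=; first exact: f0.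
by apply: integral_ge0 => x _; apply: IH.
Qed.

Lemma measurable_cons2 (k : nat) :
  measurable_fun setT (fun p : measurableTypeR R * k.-tuple R => cons_tuple p.1 p.2).
Proof.
have := (@measurable_cons _ _ _ _ (fun p : measurableTypeR R * k.-tuple R => p.1) k (fun p => p.2) measurable_fst measurable_snd).
by [].
Qed.

Lemma intRn_meas (k : nat) : forall d (X : measurableType d)
  (F : X -> k.-tuple R -> \bar R),
  measurable_fun setT (fun p : X * k.-tuple R => F p.1 p.2) ->
  (forall x y, 0 <= F x y) ->
  measurable_fun setT (fun x => intRn (F x)).
Proof.
elim: k => [|k IH] d X F mF F0 /=.
  exact: (measurableT_comp mF (measurable_fun_pair (@measurable_id _ X setT) (measurable_cst [tuple]))).
pose G := fun (p : X * measurableTypeR R) (y : k.-tuple R) => F p.1 (cons_tuple p.2 y).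
have mG : measurable_fun setT (fun q : (X * measurableTypeR R) * k.-tuple R => G q.1 q.2).
  have mc : measurable_fun setT
      (fun q : (X * measurableTypeR R) * k.-tuple R => (q.1.1, cons_tuple q.1.2 q.2)).
    apply: measurable_fun_pair => /=.
      exact: (measurableT_comp measurable_fst measurable_fst).
    exact: (measurableT_comp (measurable_cons2 k) (measurable_fun_pair
      (measurableT_comp measurable_snd measurable_fst) measurable_snd)).
  exact: (measurableT_comp mF mc).
have mH := IH _ _ G mG (fun p y => F0 _ _).
have := (@measurable_fun_fubini_tonelli_F _ _ _ _ _ _ (fun p => intRn (G p)) mH (fun p => @intRn_ge0 _ (G p) (fun y => F0 _ _))).
rewrite /fubini_F /=; by apply.
Qed.


Lemma meas_cons_x (k : nat) (x : R) (f : k.+1.-tuple R -> \bar R) :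
  measurable_fun setT f -> measurable_fun setT (fun y : k.-tuple R => f (cons_tuple x y)).
Proof.
move=> mf.
have mc : measurable_fun setT (fun y : k.-tuple R => cons_tuple x y).
  have := (@measurable_cons _ _ _ _ (fun y : k.-tuple R => x) k (fun y => y) (measurable_cst x) (@measurable_id _ _ setT)).
  by [].
exact: (measurableT_comp mf mc).
Qed.

Lemma meas_int_cons (k : nat) (f : k.+1.-tuple R -> \bar R) :
  measurable_fun setT f -> (forall y, 0 <= f y) ->
  measurable_fun setT (fun x : measurableTypeR R => intRn (fun y : k.-tuple R => f (cons_tuple x y))).
Proof.
move=> mf f0.
apply: (@intRn_meas k _ (measurableTypeR R) (fun x y => f (cons_tuple x y))) => //.
exact: (measurableT_comp mf (measurable_cons2 k)).
Qed.

Lemma intRn_add (k : nat) (f g : k.-tuple R -> \bar R) :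
  measurable_fun setT f -> measurable_fun setT g ->
  (forall y, 0 <= f y) -> (forall y, 0 <= g y) ->
  intRn (fun y => f y + g y) = intRn f + intRn g.
Proof.
elim: k f g => [|k IH] f g mf mg f0 g0 //=.
rewrite -ge0_integralD //; last 4 first.
- by move=> x _; apply: intRn_ge0.
- exact: meas_int_cons.
- by move=> x _; apply: intRn_ge0.
- exact: meas_int_cons.
apply: eq_integral => x _.
by apply: IH => //; apply: meas_cons_x.
Qed.

Lemma intRn_scale (k : nat) (c : \bar R) (f : k.-tuple R -> \bar R) :
  0 <= c -> measurable_fun setT f -> (forall y, 0 <= f y) ->
  intRn (fun y => c * f y) = c * intRn f.
Proof.
elim: k f => [|k IH] f c0 mf f0 //=.
rewrite -ge0_integralZl //; last 2 first.
- exact: meas_int_cons.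
- by move=> x _; apply: intRn_ge0.
apply: eq_integral => x _.
by apply: IH => //; apply: meas_cons_x.
Qed.

Lemma integral_le_nomeas (f g : measurableTypeR R -> \bar R) :
  (forall y, 0 <= f y) ->
  (forall y, f y <= g y) -> \int[@lebesgue_measure R]_x f x <= \int[@lebesgue_measure R]_x g x.
Proof.
move=> f0 fg.
have g0 : forall y, 0 <= g y by move=> y; exact: le_trans (f0 y) (fg y).
rewrite !ge0_integralTE //.
apply: le_ereal_sup => _ [h hf <-]; exists h => //= x.
exact: le_trans (hf x) (fg x).
Qed.

Lemma intRn_le (k : nat) (f g : k.-tuple R -> \bar R) :
  (forall y, 0 <= f y) ->
  (forall y, f y <= g y) -> intRn f <= intRn g.
Proof.
elim: k f g => [|k IH] f g f0 fg /=; first exact: fg.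
apply: integral_le_nomeas => x; first by apply: intRn_ge0.
by apply: IH.
Qed.

End intRn.

End MA.
Import MA.

Module MB.
Local Open Scope classical_set_scope.
Local Open Scope ring_scope.

Section gron.
Variable R : realType.

Lemma gronwall (L L' : R -> R) (c : R) :
  (forall t : R, is_derive t (1:R) L (L' t)) -> (forall t, L' t <= - c * L t) ->
  forall t, 0 <= t -> L t <= L 0 * expR (- (c * t)).
Proof.
move=> dL hL t t0.
pose E := fun s : R => expR (c * s).
have dE : forall s : R, is_derive s (1:R) E (c * E s).
  move=> s.
  have h1 : is_derive s (1:R) (fun s : R => c * s) c.
    have -> : (fun s : R => c * s) = c \*: (@id R) by apply/funext.
    have h2 : is_derive s (1:R) (c \*: (@id R)) (c *: (1:R)) by exact: is_deriveZ.
    by rewrite /= ?mulr1 ?scaler1 in h2.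
  have := is_derive1_comp (is_derive_expR (c * s)) h1.
  by move=> h; apply: (is_derive_eq h); rewrite mulrC.
pose g := fun s => L s * E s.
have dg : forall s : R, is_derive s (1:R) g (L s * (c * E s) + E s * L' s).
  move=> s; have h := is_deriveM (dL s) (dE s).
  have -> : g = (L * E)%R by apply/funext.
  by apply: (is_derive_eq h); rewrite /= /GRing.scale /= mulrC [E s * _]mulrC.
have dgle : forall s : R, derive1 g s <= 0.
  move=> s; rewrite derive1E (@derive_val _ _ _ _ _ _ _ (dg s)).
  have Ep : 0 < E s by exact: expR_gt0.
  have := hL s; nra.
have dgd : forall s : R, derivable g s 1 by move=> s; case: (dg s).
have gcont : {within `[0, t], continuous g}.
  apply: continuous_subspaceT => s.
  apply: differentiable_continuous; apply/derivable1_diffP; by case: (dg s).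
have := @ler0_derive1_le_cc _ g 0 t (fun s _ => dgd s) (fun s _ => dgle s) gcont t 0.
rewrite !in_itv /= lexx t0 /= lexx => /(_ isT isT isT).
rewrite /g /E mulr0 expR0 mulr1 => h.
have -> : L t = L t * expR (c * t) * expR (- (c * t)).
  by rewrite -mulrA -expRD subrr expR0 mulr1.
by rewrite ler_wpM2r // expR_ge0.
Qed.

End gron.

End MB.
Import MB.

Module MD.
Local Open Scope ring_scope.

Lemma key_ineq (R : realFieldType) (a b k nu x y : R) :
  0 < a -> 0 < b -> 0 < k -> 0 < nu -> 2 * nu * a <= b -> 2 * nu * b <= k ->
  2 * y * (- (b * y) - k * x) + 2 * k * x * y + nu * (x * (- (b * y) - k * x)) + nu * a * y * y
  <= - (nu / 2) * (a * y ^+ 2 + k * x ^+ 2 + nu * a * (x * y)).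
Proof.
move=> a0 b0 k0 nu0 h1 h2.
have T1 : 0 <= (b / 2) * (y + nu * x) ^+ 2 by rewrite mulr_ge0 ?sqr_ge0 // divr_ge0 // ltW.
have T2 : 0 <= (nu * a / 4) * (y - nu * x) ^+ 2 by rewrite mulr_ge0 ?sqr_ge0 // divr_ge0 // mulr_ge0 // ltW.
have H1 : 0 <= (b - 2 * nu * a) * y ^+ 2 by rewrite mulr_ge0 ?sqr_ge0 // subr_ge0.
have H4 : 0 <= b * y ^+ 2 by rewrite mulr_ge0 ?sqr_ge0 // ltW.
have H2 : 0 <= nu * (k - 2 * nu * b) * x ^+ 2 by rewrite mulr_ge0 ?sqr_ge0 // mulr_ge0 ?subr_ge0 // ltW.
have H3 : 0 <= nu * nu * (b - 2 * nu * a) * x ^+ 2 by rewrite mulr_ge0 ?sqr_ge0 // mulr_ge0 ?subr_ge0 // mulr_ge0 // ltW.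
have H5 : 0 <= nu * nu * b * x ^+ 2 by rewrite mulr_ge0 ?sqr_ge0 // mulr_ge0 // ?mulr_ge0 // ltW.
nra.
Qed.

Lemma pos_ineq (R : realFieldType) (a b k nu x y : R) :
  0 < a -> 0 < b -> 0 < k -> 0 < nu -> 2 * nu * a <= b -> 2 * nu * b <= k ->
  3/4 * (a * y ^+ 2 + k * x ^+ 2) <= a * y ^+ 2 + k * x ^+ 2 + nu * a * (x * y) /\
  a * y ^+ 2 + k * x ^+ 2 + nu * a * (x * y) <= 5/4 * (a * y ^+ 2 + k * x ^+ 2).
Proof.
move=> a0 b0 k0 nu0 h1 h2.
(* a*(1/4 a y^2 + 1/4 k x^2 +- nu a x y) = 1/4 (a y +- 2 nu a x)^2 + (a k/4 - nu^2 a^2) x^2 *)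
have hk : 4 * nu * nu * a <= k.
  have : 2 * nu * (2 * nu * a) <= 2 * nu * b by rewrite ler_pM2l ?mulr_gt0.
  lra.
have S1 : 0 <= (a * y + 2 * nu * a * x) ^+ 2 by rewrite sqr_ge0.
have S2 : 0 <= (a * y - 2 * nu * a * x) ^+ 2 by rewrite sqr_ge0.
have S3 : 0 <= a * (k - 4 * nu * nu * a) * x ^+ 2 by rewrite mulr_ge0 ?sqr_ge0 // mulr_ge0 ?subr_ge0 // ltW.
split.
- suff : 0 <= a * (a * y ^+ 2 / 4 + k * x ^+ 2 / 4 + nu * a * (x * y)).
    by rewrite pmulr_rge0 //; lra.
  nra.
- suff : 0 <= a * (a * y ^+ 2 / 4 + k * x ^+ 2 / 4 - nu * a * (x * y)).
    by rewrite pmulr_rge0 //; lra.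
  nra.
Qed.

End MD.
Import MD.

Module MC.
Local Open Scope classical_set_scope.
Local Open Scope ring_scope.

Section en.
Variable R : realType.

Lemma energy_decay (a b k nu : R) (f : R -> R) :
  0 < a -> 0 < b -> 0 < k -> 0 < nu -> 2 * nu * a <= b -> 2 * nu * b <= k ->
  (forall t, derivable f t 1) -> (forall t, derivable (derive1 f) t 1) ->
  (forall t, a * derive1 (derive1 f) t + b * derive1 f t + k * f t = 0) ->
  forall t, 0 <= t ->
   a * (derive1 f t) ^+ 2 + k * (f t) ^+ 2 <=
   2 * (a * (derive1 f 0) ^+ 2 + k * (f 0) ^+ 2) * expR (- (nu / 2 * t)).
Proof.
move=> a0 b0 k0 nu0 h1 h2 df ddf ode t t0.
set f' := derive1 f; set f'' := derive1 f'.
have Df : forall s : R, is_derive s (1:R) f (f' s).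
  by move=> s; rewrite /f' derive1E; apply: derivableP.
have Df' : forall s : R, is_derive s (1:R) f' (f'' s).
  by move=> s; rewrite /f'' derive1E; apply: derivableP.
pose Lf := a \*: (f' ^+ 2) + k \*: (f ^+ 2) + (nu * a) \*: (f * f').
pose L' := fun s => a * (2 * f' s * f'' s) + k * (2 * f s * f' s)
   + nu * a * (f s * f'' s + f' s * f' s).
have DL : forall s : R, is_derive s (1:R) Lf (L' s).
  move=> s.
  have := is_deriveD (is_deriveD (is_deriveZ a (is_deriveX 2 (Df' s)))
     (is_deriveZ k (is_deriveX 2 (Df s)))) (is_deriveZ (nu * a) (is_deriveM (Df s) (Df' s))).
  move=> h; apply: (is_derive_eq h).
  rewrite /L' /GRing.scale /=. ring.
have LfE : forall s, Lf s = a * f' s ^+ 2 + k * f s ^+ 2 + nu * a * (f s * f' s).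
  by move=> s.
have hL : forall s, L' s <= - (nu / 2) * Lf s.
  move=> s; rewrite LfE.
  have -> : L' s = 2 * f' s * (a * f'' s) + 2 * k * f s * f' s
     + nu * (f s * (a * f'' s)) + nu * a * f' s * f' s by rewrite /L'; ring.
  have -> : a * f'' s = - (b * f' s) - k * f s.
    have := ode s; rewrite -/f' -/f''; lra.
  exact: key_ineq.
have G := @gronwall R Lf L' (nu / 2) DL hL t t0.
have [P1 _] := @pos_ineq R a b k nu (f t) (f' t) a0 b0 k0 nu0 h1 h2.
have [_ P2] := @pos_ineq R a b k nu (f 0) (f' 0) a0 b0 k0 nu0 h1 h2.
rewrite !LfE in G.
have e0 : 0 <= expR (- (nu / 2 * t)) by exact: expR_ge0.
have E0 : 0 <= a * f' 0 ^+ 2 + k * f 0 ^+ 2.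
  by rewrite addr_ge0 // mulr_ge0 ?sqr_ge0 // ltW.
set E0v := a * f' 0 ^+ 2 + k * f 0 ^+ 2 in E0 P2 *.
set L0 := a * f' 0 ^+ 2 + k * f 0 ^+ 2 + nu * a * (f 0 * f' 0) in G P2.
have : L0 * expR (- (nu / 2 * t)) <= 5/4 * E0v * expR (- (nu / 2 * t)).
  by rewrite ler_wpM2r.
nra.
Qed.
End en.

End MC.
Import MC.

Module ME.
Local Open Scope ring_scope.

Section pw.
Variable R : realType.
Implicit Types (x y p q r e : R).

Lemma pw_base x y p : 0 <= p -> 0 <= x -> x <= y -> x `^ p <= y `^ p.
Proof.
move=> p0 x0 xy; apply: (ge0_ler_powR p0) => //; rewrite nnegrE //.
exact: le_trans xy.
Qed.

Lemma pw_base_neg x y p : p <= 0 -> 0 < x -> x <= y -> y `^ p <= x `^ p.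
Proof.
move=> p0 x0 xy.
have y0 : 0 < y by exact: (lt_le_trans x0 xy).
have [q q0 ->] : exists2 q, 0 <= q & p = - q by exists (- p); [lra | rewrite opprK].
rewrite !powRN lef_pV2 ?posrE ?powR_gt0 //.
exact: pw_base _ _ _ q0 (ltW x0) xy.
Qed.

Lemma pw_exp_ge1 x p q : 1 <= x -> p <= q -> x `^ p <= x `^ q.
Proof. by move=> x1 pq; apply: ler_powR. Qed.

Lemma pw_exp_le1 x p q : 0 < x -> x <= 1 -> p <= q -> x `^ q <= x `^ p.
Proof. by move=> x0 x1 pq; apply: ger_powR => //; rewrite x0 x1. Qed.

Lemma pwD x p q : 0 < x -> x `^ (p + q) = x `^ p * x `^ q.
Proof. move=> x0; rewrite powRD //; apply/implyP => _; exact: lt0r_neq0. Qed.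

Lemma pw_gt0 x p : 0 < x -> 0 < x `^ p.
Proof. exact: powR_gt0. Qed.

Lemma pw_le1 x p : 0 <= p -> 0 <= x -> x <= 1 -> x `^ p <= 1.
Proof.
move=> p0 x0 x1; have := pw_base _ _ _ p0 x0 x1; by rewrite powR1.
Qed.

Lemma pw_ge1 x p : 0 <= p -> 1 <= x -> 1 <= x `^ p.
Proof.
move=> p0 x1; have := pw_base _ _ _ p0 ler01 x1; by rewrite powR1.
Qed.

Lemma weight e r p : 0 < e -> e <= r ->
  r `^ p <= (1 + (e / (1 + e)) `^ p) * (1 + r) `^ p.
Proof.
move=> e0 er.
have r0 : 0 < r by exact: lt_le_trans er.
have r1 : 0 < 1 + r by lra.
have -> : r `^ p = (1 + r) `^ p * (r / (1 + r)) `^ p.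
  rewrite -powRM; [|lra|]; last by apply: divr_ge0; lra.
  by congr (_ `^ _); field; lra.
rewrite [X in _ <= X]mulrC ler_wpM2l ?powR_ge0 //.
have q0 : 0 < e / (1 + e) by apply: divr_gt0; lra.
have qr : e / (1 + e) <= r / (1 + r).
  rewrite ler_pdivrMr; last lra.
  rewrite mulrAC ler_pdivlMr; last lra.
  nra.
have r11 : r / (1 + r) <= 1 by rewrite ler_pdivrMr; lra.
have q1 : 0 <= (e / (1 + e)) `^ p by exact: powR_ge0.
case: (lerP 0 p) => p0.
  have := pw_le1 _ _ p0 (ltW (lt_le_trans q0 qr)) r11; lra.
have := pw_base_neg _ _ _ (ltW p0) q0 qr; lra.
Qed.

End pw.

End ME.
Import ME.

Module MF.
Local Open Scope ring_scope.

Section F.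
Variable R : realType.

Definition odeP (a b k : R) (f : R -> R) :=
  (forall t, derivable f t 1) /\ (forall t, derivable (derive1 f) t 1) /\
  (forall t, a * derive1 (derive1 f) t + b * derive1 f t + k * f t = 0).

Lemma two_decay (a b k nu : R) (f g : R -> R) :
  0 < a -> 0 < b -> 0 < k -> 0 < nu -> 2 * nu * a <= b -> 2 * nu * b <= k ->
  odeP a b k f -> odeP a b k g -> forall t, 0 <= t ->
  a * (derive1 f t ^+ 2 + derive1 g t ^+ 2) + k * (f t ^+ 2 + g t ^+ 2) <=
  2 * (a * (derive1 f 0 ^+ 2 + derive1 g 0 ^+ 2) + k * (f 0 ^+ 2 + g 0 ^+ 2))
    * expR (- (nu / 2 * t)).
Proof.
move=> a0 b0 k0 nu0 h1 h2 [df [ddf fo]] [dg [ddg og]] t t0.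
have := @energy_decay R a b k nu f a0 b0 k0 nu0 h1 h2 df ddf fo t t0.
have := @energy_decay R a b k nu g a0 b0 k0 nu0 h1 h2 dg ddg og t t0.
set X := expR _.
set F1 := derive1 f t ^+ 2; set G1 := derive1 g t ^+ 2.
set F0 := f t ^+ 2; set G0 := g t ^+ 2.
set F1' := derive1 f 0 ^+ 2; set G1' := derive1 g 0 ^+ 2.
set F0' := f 0 ^+ 2; set G0' := g 0 ^+ 2.
move=> H1 H2.
have -> : a * (F1 + G1) + k * (F0 + G0) = (a * F1 + k * F0) + (a * G1 + k * G0) by ring.
have -> : 2 * (a * (F1' + G1') + k * (F0' + G0')) * X =
  2 * (a * F1' + k * F0') * X + 2 * (a * G1' + k * G0') * X by ring.
lra.
Qed.

End F.
Arguments odeP {R}.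
Arguments two_decay {R a b k nu f g}.

Section Fi.
Variable R : realType.

Lemma pow_split (r p q : R) : 0 < r -> r `^ (p + q) = r `^ p * r `^ q.
Proof. exact: pwD. Qed.

Lemma one_le_pw (e r d : R) : 0 < e -> e <= r -> 0 <= d -> 1 <= e `^ (- d) * r `^ d.
Proof.
move=> e0 er d0.
have : e `^ d <= r `^ d by apply: pw_base => //; exact: ltW.
have ed : 0 < e `^ d by exact: pw_gt0.
rewrite powRN => h.
rewrite -(ler_pM2l ed) mulrA mulfV ?gt_eqF // mul1r mulr1 //.
Qed.

Lemma weight_a (e r d s : R) : 0 < e -> e <= r -> 0 <= d ->
  r `^ s * (1 + r `^ d) <= (1 + e `^ (- d)) * (1 + (e / (1 + e)) `^ (d + s)) * (1 + r) `^ (d + s).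
Proof.
move=> e0 er d0.
have r0 : 0 < r by exact: lt_le_trans er.
have h1 := one_le_pw _ _ _ e0 er d0.
have W := @weight R e r (d + s) e0 er.
have rs : 0 <= r `^ s by exact: powR_ge0.
have rds : r `^ (d + s) = r `^ d * r `^ s by rewrite pwD.
have e1 : 0 <= e `^ (- d) by exact: powR_ge0.
have : r `^ s * (1 + r `^ d) <= (1 + e `^ (- d)) * r `^ (d + s).
  rewrite rds.
  have : r `^ s * 1 <= r `^ s * (e `^ (- d) * r `^ d) by rewrite ler_wpM2l.
  nra.
move=> h; apply: (le_trans h).
rewrite -mulrA ler_wpM2l //; lra.
Qed.

Lemma case_i (e delta alpha theta sigma : R) : 0 < e -> e < 1 ->
  0 <= delta -> 0 <= alpha -> 0 <= theta -> theta <= alpha -> delta <= theta ->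
  exists c, 0 < c /\ exists C, 0 < C /\ forall (r : R) (f g : R -> R), e <= r ->
   odeP (1 + r `^ delta) (r `^ theta) (r `^ alpha) f ->
   odeP (1 + r `^ delta) (r `^ theta) (r `^ alpha) g -> forall t, 0 <= t ->
   2^-1 * r `^ (delta + sigma / 2) * (derive1 f t ^+ 2 + derive1 g t ^+ 2)
   + 2^-1 * r `^ (alpha + sigma / 2) * (f t ^+ 2 + g t ^+ 2) <=
   C * expR (- (c * t)) * ((1 + r) `^ (delta + sigma / 2) * (derive1 f 0 ^+ 2 + derive1 g 0 ^+ 2)
     + (1 + r) `^ (alpha + sigma / 2) * (f 0 ^+ 2 + g 0 ^+ 2)).
Proof.
move=> e0 e1 d0 a0 t0 ta dt.
set nu := e `^ alpha / 4.
have nu0 : 0 < nu by rewrite divr_gt0 // pw_gt0.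
exists (nu / 2); split; first by rewrite divr_gt0.
set W1 := (1 + e `^ (- delta)) * (1 + (e / (1 + e)) `^ (delta + sigma / 2)).
set W0 := 1 + (e / (1 + e)) `^ (alpha + sigma / 2).
have W10 : 0 < W1.
  by rewrite mulr_gt0 // ltr_pwDl // powR_ge0.
have W00 : 0 < W0 by rewrite ltr_pwDl // powR_ge0.
exists (W1 + W0); split; first by rewrite addr_gt0.
move=> r f g er odf odg t tpos.
have r0 : 0 < r by exact: lt_le_trans er.
set a := 1 + r `^ delta; set b := r `^ theta; set k := r `^ alpha.
have rd0 : 0 < r `^ delta by exact: pw_gt0.
have a0' : 0 < a by rewrite /a; lra.
have b0 : 0 < b by exact: pw_gt0.
have k0 : 0 < k by exact: pw_gt0.
have eat : e `^ alpha <= e `^ theta by apply: pw_exp_le1 => //; exact: ltW.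
have et1 : e `^ theta <= 1 by apply: pw_le1 => //; [exact: ltW | exact: ltW].
have h1 : 2 * nu * a <= b.
  have : a * e `^ theta <= 2 * b.
    case: (lerP 1 r) => r1.
      have : r `^ delta <= r `^ theta by exact: pw_exp_ge1.
      have : 1 <= r `^ theta by exact: pw_ge1.
      have : a * e `^ theta <= a by rewrite ler_piMr // ltW.
      rewrite /a /b; lra.
    have : r `^ delta <= 1 by apply: pw_le1 => //; [exact: ltW | exact: ltW].
    have : e `^ theta <= r `^ theta by apply: pw_base => //; exact: ltW.
    have : 0 < e `^ theta by exact: pw_gt0.
    rewrite /a /b; nra.
  rewrite /nu => h.
  have : a * e `^ alpha <= a * e `^ theta by rewrite ler_wpM2l // ltW.
  lra.
have h2 : 2 * nu * b <= k.
  have kE : k = b * r `^ (alpha - theta) by rewrite /k /b -pwD // addrC subrK.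
  have eE : e `^ alpha = e `^ theta * e `^ (alpha - theta) by rewrite -pwD // addrC subrK.
  have : e `^ (alpha - theta) <= r `^ (alpha - theta) by apply: pw_base; [lra | exact: ltW | by []].
  have : 0 <= e `^ (alpha - theta) by exact: powR_ge0.
  have : 0 <= e `^ theta by exact: powR_ge0.
  rewrite kE /nu eE => *.
  have : e `^ theta * e `^ (alpha - theta) <= r `^ (alpha - theta) by nra.
  nra.
have D := two_decay a0' b0 k0 nu0 h1 h2 odf odg t tpos.
set X := expR _ in D.
have -> : expR (- (nu / 2 * t)) = X by [].
have X0 : 0 <= X by exact: expR_ge0.
set F1 := (derive1 f t ^+ 2 + derive1 g t ^+ 2) in D *.
set F0 := (f t ^+ 2 + g t ^+ 2) in D *.
set F1' := (derive1 f 0 ^+ 2 + derive1 g 0 ^+ 2) in D *.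
set F0' := (f 0 ^+ 2 + g 0 ^+ 2) in D *.
have F10 : 0 <= F1 by rewrite addr_ge0 // sqr_ge0.
have F00 : 0 <= F0 by rewrite addr_ge0 // sqr_ge0.
have F10' : 0 <= F1' by rewrite addr_ge0 // sqr_ge0.
have F00' : 0 <= F0' by rewrite addr_ge0 // sqr_ge0.
set P := r `^ (sigma / 2).
have P0 : 0 <= P by exact: powR_ge0.
have -> : 2^-1 * r `^ (delta + sigma / 2) * F1 + 2^-1 * r `^ (alpha + sigma / 2) * F0
   = 2^-1 * P * (r `^ delta * F1 + k * F0) by rewrite !pwD // /P /k; ring.
have S1 : r `^ delta * F1 + k * F0 <= a * F1 + k * F0.
  rewrite lerD2r ler_wpM2r // /a; lra.
have S2 : 2^-1 * P * (r `^ delta * F1 + k * F0) <= 2^-1 * P * (2 * (a * F1' + k * F0') * X).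
  apply: ler_wpM2l; first by rewrite mulr_ge0 // invr_ge0.
  exact: le_trans S1 D.
apply: (le_trans S2).
have Wa := @weight_a e r delta (sigma / 2) e0 er d0.
have Wk := @weight R e r (alpha + sigma / 2) e0 er.
rewrite -/a -/W1 in Wa; rewrite -/W0 in Wk.
have Pk : P * k = r `^ (alpha + sigma / 2) by rewrite pwD // /P /k mulrC.
have E1 : P * a <= (W1 + W0) * (1 + r) `^ (delta + sigma / 2).
  apply: (le_trans Wa); rewrite ler_wpM2r ?powR_ge0 //; lra.
have E2 : P * k <= (W1 + W0) * (1 + r) `^ (alpha + sigma / 2).
  rewrite Pk; apply: (le_trans Wk); rewrite ler_wpM2r ?powR_ge0 //; lra.
have -> : 2^-1 * P * (2 * (a * F1' + k * F0') * X) = (P * a) * (F1' * X) + (P * k) * (F0' * X)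
  by field.
have -> : (W1 + W0) * X * ((1 + r) `^ (delta + sigma / 2) * F1' + (1 + r) `^ (alpha + sigma / 2) * F0')
  = ((W1 + W0) * (1 + r) `^ (delta + sigma / 2)) * (F1' * X) + ((W1 + W0) * (1 + r) `^ (alpha + sigma / 2)) * (F0' * X)
  by ring.
apply: lerD; apply: ler_wpM2r => //; exact: mulr_ge0.
Qed.

End Fi.

End MF.
Import MF.

Module MG.
Local Open Scope ring_scope.

Section G.
Variable R : realType.

Lemma decay_poly (c p x x0 t : R) : 0 < c -> 0 < p -> 0 < x -> x <= x0 -> 0 <= t ->
  expR (- (c * x * t)) <= (c / p / (1 + c / p * x0)) `^ (- p) * (1 + t) `^ (- p) * x `^ (- p).
Proof.
move=> c0 p0 x0' xx0 t0.
set c4 := c / p.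
have c40 : 0 < c4 by rewrite divr_gt0.
set c5 := c4 / (1 + c4 * x0).
have dpos : 0 < 1 + c4 * x0 by have := mulr_gt0 c40 (lt_le_trans x0' xx0); lra.
have c50 : 0 < c5 by rewrite divr_gt0.
have y0 : 0 <= c4 * x * t by rewrite mulr_ge0 // mulr_ge0 // ltW.
have -> : expR (- (c * x * t)) = (expR (- (c4 * x * t))) `^ p.
  rewrite -expRM; congr expR; rewrite /c4; field; lra.
have s1 : expR (- (c4 * x * t)) <= (1 + c4 * x * t) `^ (-1).
  rewrite powR_inv1; last lra.
  rewrite expRN lef_pV2 ?posrE ?expR_gt0 //; last lra.
  exact: expR_ge1Dx.
have s2 : expR (- (c4 * x * t)) `^ p <= (1 + c4 * x * t) `^ (- p).
  have -> : - p = (-1) * p by ring.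
  rewrite powRrM; apply: pw_base => //; exact: ltW.
apply: (le_trans s2).
have q : c5 * (1 + t) * x <= 1 + c4 * x * t.
  have h1 : c5 * x <= 1.
    rewrite /c5 mulrAC ler_pdivrMr //.
    have : c4 * x <= c4 * x0 by rewrite ler_wpM2l // ltW.
    lra.
  have h2 : c5 <= c4.
    rewrite /c5 ler_pdivrMr //.
    have xx : 0 < x0 by exact: (lt_le_trans x0' xx0).
    have : 0 <= c4 * (c4 * x0) by apply: mulr_ge0; [exact: ltW | apply: mulr_ge0; exact: ltW].
    lra.
  have : c5 * x * t <= c4 * x * t.
    by rewrite ler_wpM2r // ler_wpM2r // ltW.
  have -> : c5 * (1 + t) * x = c5 * x + c5 * x * t by ring.
  lra.
have pos : 0 < c5 * (1 + t) * x by rewrite mulr_gt0 // mulr_gt0 //; lra.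
have hp : - p <= 0 by lra.
have := @pw_base_neg R _ _ _ hp pos q.
have t1 : 0 <= 1 + t by lra.
rewrite !powRM //; rewrite ?invr_ge0; try exact: ltW.
by rewrite mulr_ge0 // ltW.
Qed.

End G.

Section G2.
Variable R : realType.

Lemma case_ii (e delta alpha theta sigma beta : R) : 0 < e -> e < 1 ->
  0 <= delta -> 0 <= alpha -> 0 <= theta -> theta <= alpha -> theta < delta -> 0 < beta ->
  exists C, 0 < C /\ forall (r : R) (f g : R -> R), e <= r ->
   odeP (1 + r `^ delta) (r `^ theta) (r `^ alpha) f ->
   odeP (1 + r `^ delta) (r `^ theta) (r `^ alpha) g -> forall t, 0 <= t ->
   2^-1 * r `^ (delta + sigma / 2) * (derive1 f t ^+ 2 + derive1 g t ^+ 2)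
   + 2^-1 * r `^ (alpha + sigma / 2) * (f t ^+ 2 + g t ^+ 2) <=
   C * (1 + t) `^ (- beta^-1) *
     ((1 + r) `^ (delta + (delta - theta) / beta + sigma / 2) * (derive1 f 0 ^+ 2 + derive1 g 0 ^+ 2)
     + (1 + r) `^ (alpha + (delta - theta) / beta + sigma / 2) * (f 0 ^+ 2 + g 0 ^+ 2)).
Proof.
move=> e0 e1 d0 a0 t0 ta dt b0'.
set m := e `^ (alpha - theta) / 2.
have m0 : 0 < m by apply: divr_gt0 => //; apply: powR_gt0.
have eat1 : e `^ (alpha - theta) <= 1 by apply: pw_le1; [lra | exact: ltW | exact: ltW].
set D := delta - theta.
have D0 : 0 < D by rewrite /D; lra.
set p := beta^-1.
have p0 : 0 < p by rewrite invr_gt0.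
have ed0 : 0 < e `^ (- delta) by exact: pw_gt0.
set c2 := m / (1 + e `^ (- delta)).
have c20 : 0 < c2 by rewrite divr_gt0 //; lra.
set x0 := e `^ (- D).
set K := (c2 / 2 / p / (1 + c2 / 2 / p * x0)) `^ (- p).
have K0 : 0 < K.
  have c2p : 0 < c2 / 2 / p by apply: divr_gt0 => //; apply: divr_gt0.
  apply: powR_gt0; apply: divr_gt0 => //.
  have : 0 < c2 / 2 / p * x0 by apply: mulr_gt0 => //; apply: powR_gt0.
  lra.
set s := D * p + sigma / 2.
set W1 := (1 + e `^ (- delta)) * (1 + (e / (1 + e)) `^ (delta + s)).
set W0 := 1 + (e / (1 + e)) `^ (alpha + s).
have W10 : 0 < W1 by rewrite mulr_gt0 // ltr_pwDl // powR_ge0.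
have W00 : 0 < W0 by rewrite ltr_pwDl // powR_ge0.
exists (K * (W1 + W0)); split; first by rewrite mulr_gt0 // addr_gt0.
move=> r f g er odf odg t tpos.
have -> : delta + (delta - theta) / beta + sigma / 2 = delta + s by rewrite /s /D /p; ring.
have -> : alpha + (delta - theta) / beta + sigma / 2 = alpha + s by rewrite /s /D /p; ring.
rewrite -/p.
have r0 : 0 < r by exact: lt_le_trans er.
set a := 1 + r `^ delta; set b := r `^ theta; set k := r `^ alpha.
have rd0 : 0 < r `^ delta by exact: pw_gt0.
have a0' : 0 < a by rewrite /a; lra.
have b0 : 0 < b by exact: pw_gt0.
have k0 : 0 < k by exact: pw_gt0.
set nu := m * b / a.
have nu0 : 0 < nu by rewrite /nu divr_gt0 // mulr_gt0.
have h1 : 2 * nu * a <= b.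
  have -> : 2 * nu * a = 2 * m * b by rewrite /nu; field; lra.
  rewrite /m; nra.
have ba : b <= a.
  case: (lerP 1 r) => r1.
    have : r `^ theta <= r `^ delta by apply: pw_exp_ge1 => //; exact: ltW.
    rewrite /a /b; lra.
  have : r `^ theta <= 1 by apply: pw_le1 => //; exact: ltW.
  rewrite /a /b; lra.
have h2 : 2 * nu * b <= k.
  have kE : k = b * r `^ (alpha - theta) by rewrite /k /b -pwD // addrC subrK.
  have er' : e `^ (alpha - theta) <= r `^ (alpha - theta) by apply: pw_base; [lra | exact: ltW | by []].
  have e0' : 0 <= e `^ (alpha - theta) by exact: powR_ge0.
  have -> : 2 * nu * b = e `^ (alpha - theta) * b * b / a by rewrite /nu /m; field; lra.
  rewrite ler_pdivrMr // kE.
  nra.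
have Dd := two_decay a0' b0 k0 nu0 h1 h2 odf odg t tpos.
set X := expR _ in Dd.
set x := r `^ (- D).
have x0' : 0 < x by exact: pw_gt0.
have xx0 : x <= x0 by apply: pw_base_neg => //; lra.
have xrd : x * r `^ delta = b by rewrite /x -pwD // /D /b; congr (_ `^ _); ring.
have nux : c2 * x <= nu.
  have h := @one_le_pw R _ _ _ e0 er d0.
  have aa : a <= (1 + e `^ (- delta)) * r `^ delta by rewrite /a; nra.
  rewrite /nu ler_pdivlMr //.
  have -> : c2 * x * a = (m / (1 + e `^ (- delta))) * (x * a) by rewrite /c2; ring.
  have : x * a <= x * ((1 + e `^ (- delta)) * r `^ delta) by rewrite ler_wpM2l // ltW.
  have -> : m * b = (m / (1 + e `^ (- delta))) * (x * ((1 + e `^ (- delta)) * r `^ delta)).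
    rewrite -xrd; field; lra.
  move=> hh; rewrite ler_wpM2l //; exact: ltW.
have XX : X <= expR (- (c2 / 2 * x * t)).
  rewrite /X ler_expR lerN2.
  have -> : nu / 2 * t = (nu * t) / 2 by ring.
  have -> : c2 / 2 * x * t = (c2 * x * t) / 2 by ring.
  rewrite ler_pM2r // ler_wpM2r //.
have c22 : 0 < c2 / 2 by apply: divr_gt0.
have dp := @decay_poly R (c2 / 2) p x x0 t c22 p0 x0' xx0 tpos.
rewrite -/K in dp.
have xp : x `^ (- p) = r `^ (D * p).
  by rewrite /x -powRrM; congr (_ `^ _); ring.
rewrite xp in dp.
set Y := (1 + t) `^ (- p) in dp *.
have Y0 : 0 <= Y by exact: powR_ge0.
have XB : X <= K * Y * r `^ (D * p) := le_trans XX dp.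
have X0 : 0 <= X by exact: expR_ge0.
set F1 := (derive1 f t ^+ 2 + derive1 g t ^+ 2) in Dd *.
set F0 := (f t ^+ 2 + g t ^+ 2) in Dd *.
set F1' := (derive1 f 0 ^+ 2 + derive1 g 0 ^+ 2) in Dd *.
set F0' := (f 0 ^+ 2 + g 0 ^+ 2) in Dd *.
have F10 : 0 <= F1 by rewrite addr_ge0 // sqr_ge0.
have F00 : 0 <= F0 by rewrite addr_ge0 // sqr_ge0.
have F10' : 0 <= F1' by rewrite addr_ge0 // sqr_ge0.
have F00' : 0 <= F0' by rewrite addr_ge0 // sqr_ge0.
set P := r `^ (sigma / 2).
have P0 : 0 <= P by exact: powR_ge0.
have -> : 2^-1 * r `^ (delta + sigma / 2) * F1 + 2^-1 * r `^ (alpha + sigma / 2) * F0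
   = 2^-1 * P * (r `^ delta * F1 + k * F0) by rewrite !pwD // /P /k; ring.
have S1 : r `^ delta * F1 + k * F0 <= a * F1 + k * F0.
  rewrite lerD2r ler_wpM2r // /a; lra.
have G0 : 0 <= a * F1' + k * F0'.
  by rewrite addr_ge0 // mulr_ge0 // ltW.
have S2 : 2^-1 * P * (r `^ delta * F1 + k * F0) <= 2^-1 * P * (2 * (a * F1' + k * F0') * (K * Y * r `^ (D * p))).
  apply: ler_wpM2l; first by rewrite mulr_ge0 // invr_ge0.
  apply: (le_trans S1); apply: (le_trans Dd).
  apply: ler_wpM2l => //; rewrite mulr_ge0 //.
apply: (le_trans S2).
have Wa := @weight_a R e r delta s e0 er d0.
have Wk := @weight R e r (alpha + s) e0 er.
rewrite -/a -/W1 in Wa; rewrite -/W0 in Wk.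
have rsE : r `^ s = r `^ (D * p) * P by rewrite /s; apply: pwD.
have Pk : r `^ s * k = r `^ (alpha + s) by rewrite /k -pwD // addrC.
have E1 : r `^ s * a <= (W1 + W0) * (1 + r) `^ (delta + s).
  apply: (le_trans Wa); rewrite ler_wpM2r ?powR_ge0 //; lra.
have E2 : r `^ s * k <= (W1 + W0) * (1 + r) `^ (alpha + s).
  rewrite Pk; apply: (le_trans Wk); rewrite ler_wpM2r ?powR_ge0 //; lra.
have KY : 0 <= K * Y by rewrite mulr_ge0 // ltW.
have -> : 2^-1 * P * (2 * (a * F1' + k * F0') * (K * Y * r `^ (D * p)))
   = (r `^ s * a) * (K * Y * F1') + (r `^ s * k) * (K * Y * F0')
  by rewrite rsE; field.
have -> : K * (W1 + W0) * Y * ((1 + r) `^ (delta + s) * F1' + (1 + r) `^ (alpha + s) * F0')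
  = ((W1 + W0) * (1 + r) `^ (delta + s)) * (K * Y * F1') + ((W1 + W0) * (1 + r) `^ (alpha + s)) * (K * Y * F0')
  by ring.
apply: lerD; apply: ler_wpM2r => //; exact: mulr_ge0.
Qed.

End G2.

End MG.
Import MG.


Arguments intRn_le {R k f g}.
Arguments intRn_add {R k f g}.
Arguments intRn_scale {R k c f}.

Section H.
Variable R : realType.

Lemma sqrt_pw (r y : R) : 0 <= r -> Num.sqrt r `^ (2 * y) = r `^ y.
Proof.
move=> r0; rewrite -powR12_sqrt // -powRrM; congr (_ `^ _).
by rewrite mulrA mulVf ?mul1r // pnatr_eq0.
Qed.

Lemma enorm2_ge0 n (xi : n.-tuple R) : 0 <= enorm2 xi.
Proof. by rewrite /enorm2; apply: sumr_ge0 => i _; exact: sqr_ge0. Qed.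

Lemma meas_enorm2 n : measurable_fun setT (@enorm2 R n).
Proof.
rewrite /enorm2.
apply: measurable_sum => i.
apply: measurable_funX; exact: measurable_tnth.
Qed.

Lemma meas_Hs_integrand n (s : R) (fre fim : n.-tuple R -> R) :
  measurable_fun setT fre -> measurable_fun setT fim ->
  measurable_fun setT (fun xi => ((1 + enorm2 xi) `^ s * (fre xi ^+ 2 + fim xi ^+ 2))%:E).
Proof.
move=> mre mim; apply/measurable_EFinP.
apply: measurable_funM.
  apply: (measurableT_comp (measurable_powR s)).
  apply: measurable_funD => //; exact: meas_enorm2.
apply: measurable_funD; exact: measurable_funX.
Qed.

End H.
Arguments enorm2_ge0 {R n}.
Arguments sqrt_pw {R}.
Arguments meas_Hs_integrand {R n}.

Lemma odeP_of (R : realType) n (delta alpha theta : R) (xi : n.-tuple R) f a b :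
  solves_ode delta alpha theta xi f a b ->
  odeP (1 + enorm2 xi `^ delta) (enorm2 xi `^ theta) (enorm2 xi `^ alpha) f
  /\ f 0 = a /\ derive1 f 0 = b.
Proof.
move=> [d1 [d2 [f0 [f'0 o]]]]; split; last by [].
split; first exact: d1. split; first exact: d2.
move=> t; have := o t.
by rewrite /enorm !sqrt_pw //; exact: enorm2_ge0.
Qed.

Arguments odeP_of {R n delta alpha theta xi f a b}.

Lemma E1_rewrite (R : realType) n (delta alpha sigma : R) ure uim t (xi : n.-tuple R) :
  E1 delta alpha sigma ure uim t xi =
  2^-1 * enorm2 xi `^ (delta + sigma / 2) * (derive1 (fun s => ure s xi) t ^+ 2 + derive1 (fun s => uim s xi) t ^+ 2)
  + 2^-1 * enorm2 xi `^ (alpha + sigma / 2) * (ure t xi ^+ 2 + uim t xi ^+ 2).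
Proof.
rewrite /E1 /enorm.
have h y : 2 * y + sigma = 2 * (y + sigma / 2) by field.
by rewrite !h !sqrt_pw //; exact: enorm2_ge0.
Qed.

Theorem proposition3p1 (R : realType) (n : nat) (delta alpha theta sigma eps : R) :
  0 <= delta -> 0 <= alpha -> 0 <= theta -> theta <= alpha ->
  0 < eps -> eps < 1 ->
  (* (i) *)
  (delta <= theta ->
   exists c : R, 0 < c /\ exists C : R, 0 < C /\
   forall (v0re v0im v1re v1im : n.-tuple R -> R)
          (ure uim : R -> n.-tuple R -> R),
     in_Hs (alpha + sigma / 2) v0re v0im ->
     in_Hs (delta + sigma / 2) v1re v1im ->
     (forall xi, solves_ode delta alpha theta xi (fun t => ure t xi) (v0re xi) (v1re xi)) ->
     (forall xi, solves_ode delta alpha theta xi (fun t => uim t xi) (v0im xi) (v1im xi)) ->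
     forall t : R, 0 <= t ->
       (E1_high delta alpha sigma eps ure uim t <=
        (C * expR (- (c * t)))%:E *
        (Hs_norm2 (delta + sigma / 2) v1re v1im
         + Hs_norm2 (alpha + sigma / 2) v0re v0im))%E)
  /\
  (* (ii) *)
  (forall beta : R, 0 < beta -> theta < delta ->
   exists C : R, 0 < C /\
   forall (v0re v0im v1re v1im : n.-tuple R -> R)
          (ure uim : R -> n.-tuple R -> R),
     in_Hs (alpha + (delta - theta) / beta + sigma / 2) v0re v0im ->
     in_Hs (delta + (delta - theta) / beta + sigma / 2) v1re v1im ->
     (forall xi, solves_ode delta alpha theta xi (fun t => ure t xi) (v0re xi) (v1re xi)) ->
     (forall xi, solves_ode delta alpha theta xi (fun t => uim t xi) (v0im xi) (v1im xi)) ->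
     forall t : R, 0 <= t ->
       (E1_high delta alpha sigma eps ure uim t <=
        (C * (1 + t) `^ (- beta^-1))%:E *
        (Hs_norm2 (delta + (delta - theta) / beta + sigma / 2) v1re v1im
         + Hs_norm2 (alpha + (delta - theta) / beta + sigma / 2) v0re v0im))%E).
Proof.
move=> d0 a0 t0 ta e0 e1.
have ee0 : 0 < eps ^+ 2 by rewrite exprn_gt0.
have ee1 : eps ^+ 2 < 1 by rewrite expr2; nra.
have er_of : forall xi : n.-tuple R, eps <= enorm xi -> eps ^+ 2 <= enorm2 xi.
  move=> xi; rewrite /enorm => h.
  rewrite -(sqr_sqrtr (enorm2_ge0 xi)).
  by rewrite ler_sqr // ?nnegrE ?sqrtr_ge0 // ltW.
split.
- move=> dt.
  have [c [c0 [C [C0 H]]]] := @case_i R (eps ^+ 2) delta alpha theta sigma ee0 ee1 d0 a0 t0 ta dt.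
  exists c; split => //; exists C; split => //.
  move=> v0re v0im v1re v1im ure uim [mv0re [mv0im _]] [mv1re [mv1im _]] sre sim t tpos.
  have X0 : (0 <= (C * expR (- (c * t)))%:E)%E.
    by rewrite lee_fin mulr_ge0 ?expR_ge0 // ltW.
  have m1 := meas_Hs_integrand (delta + sigma / 2) _ _ mv1re mv1im.
  have m0 := meas_Hs_integrand (alpha + sigma / 2) _ _ mv0re mv0im.
  rewrite /Hs_norm2 -intRn_add //; last 2 first.
    by move=> y; rewrite lee_fin mulr_ge0 ?powR_ge0 // addr_ge0 // sqr_ge0.
    by move=> y; rewrite lee_fin mulr_ge0 ?powR_ge0 // addr_ge0 // sqr_ge0.
  rewrite -intRn_scale //; last 2 first.
    by apply: emeasurable_funD.
    by move=> y; rewrite adde_ge0 // lee_fin mulr_ge0 ?powR_ge0 // addr_ge0 // sqr_ge0.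
  apply: intRn_le => xi.
    case: ifP => _ //; rewrite lee_fin E1_rewrite.
    by rewrite addr_ge0 // mulr_ge0 ?mulr_ge0 ?powR_ge0 ?invr_ge0 // addr_ge0 // sqr_ge0.
  case: ifP => hx; last first.
    by rewrite mule_ge0 // adde_ge0 // lee_fin mulr_ge0 ?powR_ge0 // addr_ge0 // sqr_ge0.
  have [odf [f0 f'0]] := odeP_of (sre xi).
  have [odg [g0 g'0]] := odeP_of (sim xi).
  have := H (enorm2 xi) _ _ (er_of xi hx) odf odg t tpos.
  rewrite f0 f'0 g0 g'0 -E1_rewrite => h.
  by rewrite -EFinD -EFinM lee_fin.
- move=> beta b0 dt.
  have [C [C0 H]] := @case_ii R (eps ^+ 2) delta alpha theta sigma beta ee0 ee1 d0 a0 t0 ta dt b0.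
  exists C; split => //.
  move=> v0re v0im v1re v1im ure uim [mv0re [mv0im _]] [mv1re [mv1im _]] sre sim t tpos.
  have X0 : (0 <= (C * (1 + t) `^ (- beta^-1))%:E)%E.
    by rewrite lee_fin mulr_ge0 ?powR_ge0 // ltW.
  have m1 := meas_Hs_integrand (delta + (delta - theta) / beta + sigma / 2) _ _ mv1re mv1im.
  have m0 := meas_Hs_integrand (alpha + (delta - theta) / beta + sigma / 2) _ _ mv0re mv0im.
  rewrite /Hs_norm2 -intRn_add //; last 2 first.
    by move=> y; rewrite lee_fin mulr_ge0 ?powR_ge0 // addr_ge0 // sqr_ge0.
    by move=> y; rewrite lee_fin mulr_ge0 ?powR_ge0 // addr_ge0 // sqr_ge0.
  rewrite -intRn_scale //; last 2 first.
    by apply: emeasurable_funD.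
    by move=> y; rewrite adde_ge0 // lee_fin mulr_ge0 ?powR_ge0 // addr_ge0 // sqr_ge0.
  apply: intRn_le => xi.
    case: ifP => _ //; rewrite lee_fin E1_rewrite.
    by rewrite addr_ge0 // mulr_ge0 ?mulr_ge0 ?powR_ge0 ?invr_ge0 // addr_ge0 // sqr_ge0.
  case: ifP => hx; last first.
    by rewrite mule_ge0 // adde_ge0 // lee_fin mulr_ge0 ?powR_ge0 // addr_ge0 // sqr_ge0.
  have [odf [f0 f'0]] := odeP_of (sre xi).
  have [odg [g0 g'0]] := odeP_of (sim xi).
  have := H (enorm2 xi) _ _ (er_of xi hx) odf odg t tpos.
  rewrite f0 f'0 g0 g'0 -E1_rewrite => h.
  by rewrite -EFinD -EFinM lee_fin.
Qed.
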